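(* Let $N\subset\mathbb{R}^d$ be compact and convex, and let $f_n,f:N\to\mathbb{R}$ ($n\in\mathbb{N}$) be convex functions. Extend them to $\mathbb{R}^d$ by $f_{n,N}=f_n+O_N$ and $f_N=f+O_N$. Assume that $f_N^*$ is differentiable on $\mathbb{R}^d$ with $\nabla f_N^*:\mathbb{R}^d\to N$ continuous, and that there is a compact set $M\subset\mathbb{R}^d$ with $\nabla f_N^*(M)=N$. Then $$\sup_{y\in N}|f_n(y)-f(y)|\to0\ \Longrightarrow\ \sup_{x\in\mathbb{R}^d}\ \sup_{y\in\partial f_{n,N}^*(x)}\big\|y-\nabla f_N^*(x)\big\|\to0 .$$
   Context: $O_N(y)=0$ for $y\in N$ and $O_N(y)=+\infty$ otherwise. For $g:\mathbb{R}^d\to\mathbb{R}\cup\{+\infty\}$, the Legendre transform is $g^*(x)=\sup_{y\in\mathbb{R}^d}(\langle x,y\rangle-g(y))$, and $\partial g^*(x)=\{y:\ g^*(z)\ge g^*(x)+\langle y,z-x\rangle\ \forall z\}$ is the convex subdifferential. *)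

(* Defs.v *)
From Stdlib Require Import Reals ClassicalEpsilon.
From mathcomp Require Import all_boot.

Set Implicit Arguments.
Unset Strict Implicit.

Local Open Scope R_scope.

Definition vec (d : nat) := 'I_d -> R.

Definition vadd {d} (x y : vec d) : vec d := fun i => x i + y i.
Definition vsub {d} (x y : vec d) : vec d := fun i => x i - y i.
Definition vscale {d} (t : R) (x : vec d) : vec d := fun i => t * x i.

Definition inner {d} (x y : vec d) : R := \big[Rplus/0]_(i < d) (x i * y i).
Definition vnorm {d} (x : vec d) : R := sqrt (inner x x).

Definition convex_set {d} (N : vec d -> Prop) : Prop :=
  forall x y t, N x -> N y -> 0 <= t <= 1 ->
    N (vadd (vscale t x) (vscale (1 - t) y)).

Definition convex_on {d} (N : vec d -> Prop) (f : vec d -> R) : Prop :=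
  forall x y t, N x -> N y -> 0 <= t <= 1 ->
    f (vadd (vscale t x) (vscale (1 - t) y)) <= t * f x + (1 - t) * f y.

Definition vconv {d} (u : nat -> vec d) (l : vec d) : Prop :=
  forall eps, eps > 0 -> exists n0, forall n, (n0 <= n)%nat ->
    vnorm (vsub (u n) l) < eps.

Definition compact_set {d} (K : vec d -> Prop) : Prop :=
  forall u : nat -> vec d, (forall n, K (u n)) ->
    exists (phi : nat -> nat) (l : vec d),
      (forall n, (phi n < phi (S n))%nat) /\ K l /\ vconv (fun n => u (phi n)) l.

(* supremum of a set of reals (0 if not bounded above or empty) *)
Definition sup_or0 (E : R -> Prop) : R :=
  match excluded_middle_informative (bound E /\ exists x, E x) with
  | left H => proj1_sig (completeness E (proj1 H) (proj2 H))
  | right _ => 0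
  end.

(* Legendre transform of f_N = f + O_N :
   (f_N)^*(x) = sup_{y in N} (<x,y> - f y) *)
Definition legendreN {d} (N : vec d -> Prop) (f : vec d -> R) (x : vec d) : R :=
  sup_or0 (fun r => exists y, N y /\ r = inner x y - f y).

Definition subdiff {d} (g : vec d -> R) (x y : vec d) : Prop :=
  forall z, g z >= g x + inner y (vsub z x).

Definition has_gradient {d} (g : vec d -> R) (x G : vec d) : Prop :=
  forall eps, eps > 0 -> exists delta, delta > 0 /\ forall h : vec d,
    vnorm h < delta ->
    Rabs (g (vadd x h) - g x - inner G h) <= eps * vnorm h.

Definition vcontinuous {d} (F : vec d -> vec d) : Prop :=
  forall x eps, eps > 0 -> exists delta, delta > 0 /\ forall z,
    vnorm (vsub z x) < delta -> vnorm (vsub (F z) (F x)) < eps.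

(* Main.v *)
From HB Require Import structures.
Require Import Defs.
From Stdlib Require Import Reals Lra Lia ZArith ClassicalEpsilon Classical FunctionalExtensionality.
From mathcomp Require Import all_boot.
Local Open Scope R_scope.
Set Implicit Arguments.
HB.instance Definition _ := Monoid.isComLaw.Build R 0 Rplus (fun a b c => esym (Rplus_assoc a b c)) Rplus_comm Rplus_0_l.

Lemma sum_recr n (F : 'I_n.+1 -> R) : \big[Rplus/0]_(i<n.+1) F i = \big[Rplus/0]_(i<n) F (widen_ord (leqnSn n) i) + F ord_max.
Proof. exact: big_ord_recr. Qed.
Lemma sum_add n (F G : 'I_n -> R) : \big[Rplus/0]_(i<n) (F i + G i) = \big[Rplus/0]_(i<n) F i + \big[Rplus/0]_(i<n) G i.
Proof. elim: n F G => [|n IH] F G; first by rewrite !big_ord0; ring.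
rewrite !sum_recr IH; ring. Qed.
Lemma sum_scale n (F : 'I_n -> R) c : \big[Rplus/0]_(i<n) (c * F i) = c * \big[Rplus/0]_(i<n) F i.
Proof. elim: n F => [|n IH] F; first by rewrite !big_ord0; ring.
rewrite !sum_recr IH; ring. Qed.
Lemma sum_nonneg n (F : 'I_n -> R) : (forall i, 0 <= F i) -> 0 <= \big[Rplus/0]_(i<n) F i.
Proof. elim: n F => [|n IH] F H; first by rewrite !big_ord0; lra.
rewrite !sum_recr. have := IH (fun i => F (widen_ord (leqnSn n) i)) (fun i => H _). have := H ord_max. lra. Qed.
Lemma sum_ext n (F G : 'I_n -> R) : (forall i, F i = G i) -> \big[Rplus/0]_(i<n) F i = \big[Rplus/0]_(i<n) G i.
Proof. move=> H; apply: eq_bigr => i _; exact: H. Qed.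
Lemma sum_term n (F : 'I_n -> R) i : (forall i, 0 <= F i) -> F i <= \big[Rplus/0]_(i<n) F i.
Proof. move=> H.
have E : \big[Rplus/0]_(i<n) F i = F i + \big[Rplus/0]_(j < n | j != i) F j by exact: bigD1.
rewrite E.
have : 0 <= \big[Rplus/0]_(j < n | j != i) F j by apply: big_ind => //; [lra | move=> *; lra].
lra. Qed.

Section V.
Variable d : nat.
Implicit Types x y z : vec d.

Lemma inner_ext x x' y y' : (forall i, x i = x' i) -> (forall i, y i = y' i) -> inner x y = inner x' y'.
Proof. move=> H1 H2; apply: sum_ext => i; by rewrite H1 H2. Qed.
Lemma inner_sym x y : inner x y = inner y x.
Proof. apply: sum_ext => i; ring. Qed.
Lemma inner_addl x y z : inner (vadd x y) z = inner x z + inner y z.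
Proof. rewrite /inner -sum_add; apply: sum_ext => i; rewrite /vadd; ring. Qed.
Lemma inner_addr x y z : inner z (vadd x y) = inner z x + inner z y.
Proof. rewrite /inner -sum_add; apply: sum_ext => i; rewrite /vadd; ring. Qed.
Lemma inner_scalel t x y : inner (vscale t x) y = t * inner x y.
Proof. rewrite /inner -sum_scale; apply: sum_ext => i; rewrite /vscale; ring. Qed.
Lemma inner_scaler t x y : inner y (vscale t x) = t * inner y x.
Proof. rewrite /inner -sum_scale; apply: sum_ext => i; rewrite /vscale; ring. Qed.
Lemma inner_subl x y z : inner (vsub x y) z = inner x z - inner y z.
Proof. rewrite (@inner_ext (vsub x y) (vadd x (vscale (-1) y)) z z) ?inner_addl ?inner_scalel; first ring.
 all: move=> i; rewrite /vadd /vscale /vsub; ring. Qed.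
Lemma inner_subr x y z : inner z (vsub x y) = inner z x - inner z y.
Proof. by rewrite inner_sym inner_subl !(inner_sym z). Qed.
Lemma inner_ge0 x : 0 <= inner x x.
Proof. apply: sum_nonneg => i; nra. Qed.
Lemma inner_eq0 x : inner x x <= 0 -> forall i, x i = 0.
Proof. move=> H i. have := @sum_term d (fun i => x i * x i) i (fun j => ltac:(nra)). rewrite -/(inner x x). nra. Qed.

Lemma vnorm_ge0 x : 0 <= vnorm x.
Proof. exact: sqrt_pos. Qed.
Lemma vnorm_sq x : vnorm x * vnorm x = inner x x.
Proof. apply: sqrt_sqrt; exact: inner_ge0. Qed.
Lemma vnorm_ext x x' : (forall i, x i = x' i) -> vnorm x = vnorm x'.
Proof. move=> H; rewrite /vnorm (@inner_ext x x' x x' H H) //. Qed.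
Lemma vnorm_scale t x : vnorm (vscale t x) = Rabs t * vnorm x.
Proof. rewrite /vnorm inner_scalel inner_scaler -Rmult_assoc sqrt_mult; last exact: inner_ge0; last nra.
by rewrite -/(Rsqr t) sqrt_Rsqr_abs. Qed.
Lemma vnorm_le x y : vnorm x <= vnorm y -> inner x x <= inner y y.
Proof. move=> H; rewrite -!vnorm_sq; have := vnorm_ge0 x; nra. Qed.

Lemma CS_sq x y : inner x y * inner x y <= inner x x * inner y y.
Proof.
have Q : forall t, 0 <= inner x x - 2 * t * inner x y + t * t * inner y y.
  move=> t; have := inner_ge0 (vsub x (vscale t y)).
  rewrite !inner_subl !inner_subr !inner_scalel !inner_scaler (inner_sym y x); lra.
have Hc := inner_ge0 y.
case: (Req_dec (inner y y) 0) => Hc0.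
- case: (Req_dec (inner x y) 0) => Hb0; first by rewrite Hb0 Hc0; lra.
  have := Q ((inner x x + 1) / (2 * inner x y)). rewrite Hc0.
  have -> : 2 * ((inner x x + 1) / (2 * inner x y)) * inner x y = inner x x + 1 by field.
  lra.
- have := Q (inner x y / inner y y).
  have -> : inner x y / inner y y * (inner x y / inner y y) * inner y y = inner x y * inner x y / inner y y by field.
  move=> H. have Hc' : 0 < inner y y by lra.
  have : 0 <= (inner x x - 2 * (inner x y / inner y y) * inner x y + inner x y * inner x y / inner y y) * inner y y by nra.
  have -> : (inner x x - 2 * (inner x y / inner y y) * inner x y + inner x y * inner x y / inner y y) * inner y y = inner x x * inner y y - inner x y * inner x y by field.
  lra.
Qed.
Lemma CS x y : Rabs (inner x y) <= vnorm x * vnorm y.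
Proof. rewrite /vnorm -sqrt_mult; try exact: inner_ge0.
rewrite -sqrt_Rsqr_abs; apply: sqrt_le_1_alt; rewrite /Rsqr; exact: CS_sq. Qed.
Lemma CS1 x y : inner x y <= vnorm x * vnorm y.
Proof. have := CS x y; have := Rle_abs (inner x y); lra. Qed.
Lemma tri x y : vnorm (vadd x y) <= vnorm x + vnorm y.
Proof. apply: Rsqr_incr_0_var; last by have := vnorm_ge0 x; have := vnorm_ge0 y; lra.
rewrite /Rsqr vnorm_sq inner_addl !inner_addr -!vnorm_sq (inner_sym y x).
have := CS1 x y; lra. Qed.
Lemma tri_sub (a b c : vec d) : vnorm (vsub a c) <= vnorm (vsub a b) + vnorm (vsub b c).
Proof. rewrite (@vnorm_ext (vsub a c) (vadd (vsub a b) (vsub b c))); first exact: tri.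
move=> i; rewrite /vadd /vsub; ring. Qed.
Lemma vsub_sym (a b : vec d) : vnorm (vsub a b) = vnorm (vsub b a).
Proof. rewrite (@vnorm_ext (vsub a b) (vscale (-1) (vsub b a))).
 by rewrite vnorm_scale Rabs_Ropp Rabs_R1 Rmult_1_l.
move=> i; rewrite /vscale /vsub; ring. Qed.
Lemma expand_sq (v e : vec d) t : inner (vsub v (vscale t e)) (vsub v (vscale t e)) = inner v v - 2 * t * inner v e + t * t * inner e e.
Proof. rewrite !inner_subl !inner_subr !inner_scalel !inner_scaler (inner_sym e v); ring. Qed.
End V.


Lemma sup_ub (E : R -> Prop) r : bound E -> E r -> r <= sup_or0 E.
Proof. move=> Hb Hr; rewrite /sup_or0.
case: excluded_middle_informative => [H|H].
- case: (completeness E _ _) => s [Hub _] /=; exact: Hub.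
- exfalso; apply: H; split => //; by exists r. Qed.

Lemma sup_lub (E : R -> Prop) B : (exists x, E x) -> (forall r, E r -> r <= B) -> sup_or0 E <= B.
Proof. move=> Hne Hb; rewrite /sup_or0.
case: excluded_middle_informative => [H|H].
- case: (completeness E _ _) => s [_ Hlub] /=; apply: Hlub => r; exact: Hb.
- exfalso; apply: H; split => //; by exists B. Qed.

Lemma sup_unb (E : R -> Prop) : ~ bound E -> sup_or0 E = 0.
Proof. move=> Hn; rewrite /sup_or0; case: excluded_middle_informative => [H|//]; by case: Hn; case: H. Qed.

Lemma phi_ge (phi : nat -> nat) : (forall n, (phi n < phi (S n))%nat) -> forall n, (n <= phi n)%nat.
Proof. move=> H; elim=> [//|n IH]; exact: leq_ltn_trans IH (H n). Qed.

Lemma INR_unb (B : R) : exists n : nat, B < INR n.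
Proof. case: (archimed B) => H _. exists (Z.abs_nat (up B)).
rewrite INR_IZR_INZ Zabs2Nat.id_abs.
have h : (up B <= Z.abs (up B))%Z by lia. have := IZR_le _ _ h. lra. Qed.

Lemma INR_phi n (phi : nat -> nat) : (forall n, (phi n < phi (S n))%nat) -> INR n <= INR (phi n).
Proof. move=> H; apply: le_INR; apply/leP; exact: phi_ge. Qed.

Lemma vnorm_le_tri d (u l : vec d) : vnorm u <= vnorm (vsub u l) + vnorm l.
Proof. rewrite (@vnorm_ext d u (vadd (vsub u l) l)); first exact: tri.
move=> i; rewrite /vadd /vsub; ring. Qed.

Lemma compact_bounded d (K : vec d -> Prop) : compact_set K -> exists B, forall y, K y -> vnorm y <= B.
Proof. move=> HK; apply: NNPP => Hn.
have H : forall n : nat, exists y, K y /\ INR n < vnorm y.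
  move=> n; apply: NNPP => h; apply: Hn; exists (INR n) => y Ky.
  apply: Rnot_lt_le => hy; apply: h; by exists y.
pose u n := proj1_sig (constructive_indefinite_description _ (H n)).
have Hu : forall n, K (u n) /\ INR n < vnorm (u n) by move=> n; rewrite /u; case: constructive_indefinite_description.
case: (HK u (fun n => proj1 (Hu n))) => phi [l [Hphi [Kl Hc]]].
case: (Hc 1 ltac:(lra)) => n0 Hn0.
case: (INR_unb (INR n0 + 1 + vnorm l)) => m Hm.
have Hmn : (n0 <= m)%nat by apply/leP; apply: INR_le; have := pos_INR n0; have := vnorm_ge0 l; lra.
have := Hn0 m Hmn. have := vnorm_le_tri (u (phi m)) l. have := proj2 (Hu (phi m)).
have := @INR_phi m phi Hphi. have := pos_INR n0. move=> /= *; lra. Qed.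

Lemma inv_small eps : eps > 0 -> exists N, forall n, (N <= n)%nat -> / (INR n + 1) < eps.
Proof. move=> He. case: (INR_unb (/ eps)) => N HN. exists N => n Hn.
have Hle : INR N <= INR n by apply: le_INR; apply/leP.
have Hp : 0 < INR n + 1 by have := pos_INR n; lra.
apply: (Rmult_lt_reg_r (INR n + 1)) => //. rewrite Rinv_l; last lra.
have : / eps * eps = 1 by field; lra.
have : 0 < / eps by apply: Rinv_0_lt_compat.
nra. Qed.

Lemma minimizer d (K : vec d -> Prop) (k0 y : vec d) : compact_set K -> K k0 ->
  exists p, K p /\ forall p', K p' -> vnorm (vsub y p) <= vnorm (vsub y p').
Proof. move=> HK Kk0.
pose E := fun r => exists p, K p /\ r = - vnorm (vsub y p).
have Hb : bound E by exists 0 => r [p [_ ->]]; have := vnorm_ge0 (vsub y p); lra.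
have Hne : exists r, E r by exists (- vnorm (vsub y k0)); exists k0.
case: (completeness E Hb Hne) => L [HLub HLlub].
have H : forall n : nat, exists p, K p /\ L - / (INR n + 1) < - vnorm (vsub y p).
  move=> n; apply: NNPP => h.
  have Hp : 0 < / (INR n + 1) by apply: Rinv_0_lt_compat; have := pos_INR n; lra.
  suff : L <= L - / (INR n + 1) by lra.
  apply: HLlub => r [p [Kp ->]]. apply: Rnot_lt_le => hp; apply: h; by exists p.
pose u n := proj1_sig (constructive_indefinite_description _ (H n)).
have Hu : forall n, K (u n) /\ L - / (INR n + 1) < - vnorm (vsub y (u n)) by move=> n; rewrite /u; case: constructive_indefinite_description.
case: (HK u (fun n => proj1 (Hu n))) => phi [l [Hphi [Kl Hc]]].
exists l; split => //.
have HL : - vnorm (vsub y l) >= L.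
  apply: Rnot_lt_ge => hlt.
  pose g := vnorm (vsub y l) + L.
  have Hg : g / 2 > 0 by rewrite /g; lra.
  case: (Hc _ Hg) => n0 Hn0. case: (@inv_small _ Hg) => n1 Hn1.
  have h1 := Hn0 (n0 + n1)%nat (leq_addr _ _).
  have h2 := Hn1 (phi (n0 + n1)%nat) (leq_trans (leq_addl n0 n1) (@phi_ge phi Hphi _)).
  have h3 := proj2 (Hu (phi (n0 + n1)%nat)).
  have h4 := tri_sub y (u (phi (n0 + n1)%nat)) l.
  move: h1 => /= h1. rewrite /g in Hg h1 h2. lra.
move=> p' Kp'. have : E (- vnorm (vsub y p')) by exists p'.
move/HLub. lra. Qed.

Lemma unif_cont d (Gf : vec d -> vec d) (M : vec d -> Prop) : compact_set M -> vcontinuous Gf ->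
  forall eta, eta > 0 -> exists t, t > 0 /\ forall c h, M c -> vnorm h <= t ->
    vnorm (vsub (Gf (vadd c h)) (Gf c)) <= eta.
Proof. move=> HM HG eta Heta. apply: NNPP => Hn.
have H : forall n : nat, exists p : vec d * vec d, M p.1 /\ vnorm p.2 <= / (INR n + 1) /\
    vnorm (vsub (Gf (vadd p.1 p.2)) (Gf p.1)) > eta.
  move=> n; apply: NNPP => h; apply: Hn; exists (/ (INR n + 1)); split.
    apply: Rlt_gt; apply: Rinv_0_lt_compat; have := pos_INR n; lra.
  move=> c k Mc Hk; apply: Rnot_lt_le => hk; apply: h; by exists (c, k).
pose u n := proj1_sig (constructive_indefinite_description _ (H n)).
have Hu : forall n, M (u n).1 /\ vnorm (u n).2 <= / (INR n + 1) /\
    vnorm (vsub (Gf (vadd (u n).1 (u n).2)) (Gf (u n).1)) > eta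
  by move=> n; rewrite /u; case: constructive_indefinite_description.
case: (HM (fun n => (u n).1) (fun n => proj1 (Hu n))) => phi [l [Hphi [Kl Hc]]].
case: (HG l (eta / 2) ltac:(lra)) => del [Hdel Hd].
case: (Hc (del / 2) ltac:(lra)) => n0 Hn0. case: (@inv_small (del / 2) ltac:(lra)) => n1 Hn1.
pose m := phi (n0 + n1)%nat.
have h1 := Hn0 (n0 + n1)%nat (leq_addr _ _). move: h1 => /= h1. rewrite -/m in h1.
have h2 := Hn1 m (leq_trans (leq_addl n0 n1) (@phi_ge phi Hphi _)).
case: (Hu m) => _ [h3 h4].
have h5 := tri_sub (vadd (u m).1 (u m).2) (u m).1 l.
have h6 : vnorm (vsub (vadd (u m).1 (u m).2) (u m).1) = vnorm (u m).2.
  apply: vnorm_ext => i; rewrite /vsub /vadd; ring.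
have h7 := Hd (vadd (u m).1 (u m).2) ltac:(lra).
have h8 := Hd (u m).1 ltac:(lra).
have h9 := tri_sub (Gf (vadd (u m).1 (u m).2)) (Gf l) (Gf (u m).1).
rewrite (vsub_sym (Gf l)) in h9. lra. Qed.


Definition Sset d (N : vec d -> Prop) (f : vec d -> R) (z : vec d) : R -> Prop :=
  fun r => exists y, N y /\ r = inner z y - f y.

Section G.
Variables (d : nat) (N : vec d -> Prop) (f : vec d -> R).
Hypothesis Hb : forall z, bound (Sset N f z).
Hypothesis Hne : exists y, N y.
Let g := legendreN N f.

Lemma leg_ub z y : N y -> inner z y - f y <= g z.
Proof. move=> Ny; apply: sup_ub; [exact: Hb | by exists y]. Qed.
Lemma leg_lub z B : (forall y, N y -> inner z y - f y <= B) -> g z <= B.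
Proof. move=> H; apply: sup_lub.
- case: Hne => y Ny; by exists (inner z y - f y), y.
- move=> r [y [Ny ->]]; exact: H. Qed.

Lemma leg_convex a b t : 0 <= t <= 1 -> g (vadd (vscale t a) (vscale (1 - t) b)) <= t * g a + (1 - t) * g b.
Proof. move=> Ht; apply: leg_lub => y Ny.
rewrite inner_addl !inner_scalel.
have := leg_ub a Ny; have := leg_ub b Ny. nra. Qed.

Lemma leg_subgrad a G : has_gradient g a G -> forall z, g z >= g a + inner G (vsub z a).
Proof. move=> HG z; apply: Rnot_lt_ge => hlt.
set h := vsub z a in hlt *.
pose gap := g a + inner G h - g z.
have Hh := vnorm_ge0 h.
pose eps := gap / (2 * (vnorm h + 1)).
have Heps : eps > 0 by rewrite /eps /gap; apply: Rlt_gt; apply: Rdiv_lt_0_compat; lra.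
case: (HG eps Heps) => del [Hdel Hd].
pose s := Rmin (1/2) (del / (2 * (vnorm h + 1))).
have Hs0 : 0 < s by rewrite /s; apply: Rmin_glb_lt; [lra | apply: Rdiv_lt_0_compat; lra].
have Hs1 : s <= 1/2 by apply: Rmin_l.
have Hs2 : s <= del / (2 * (vnorm h + 1)) by apply: Rmin_r.
have Hsh : vnorm (vscale s h) < del.
  rewrite vnorm_scale Rabs_pos_eq; last lra.
  have : s * (2 * (vnorm h + 1)) <= del.
    have -> : del = del / (2 * (vnorm h + 1)) * (2 * (vnorm h + 1)) by field; lra.
    apply: Rmult_le_compat_r; lra.
  nra.
have H1 := Hd _ Hsh.
have E : vadd a (vscale s h) = vadd (vscale s z) (vscale (1 - s) a).
  apply: functional_extensionality => i; rewrite /vadd /vscale /h /vsub; ring.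
rewrite E inner_scaler vnorm_scale (Rabs_pos_eq s (Rlt_le _ _ Hs0)) in H1.
have H2 : g (vadd (vscale s z) (vscale (1 - s) a)) <= s * g z + (1 - s) * g a by apply: leg_convex; lra.
have H3 : - Rabs (g (vadd (vscale s z) (vscale (1 - s) a)) - g a - s * inner G h) <= g (vadd (vscale s z) (vscale (1 - s) a)) - g a - s * inner G h.
  have := Rle_abs (- (g (vadd (vscale s z) (vscale (1 - s) a)) - g a - s * inner G h)); rewrite Rabs_Ropp; lra.
have H4 : eps * vnorm h < gap.
  rewrite /eps. have -> : gap / (2 * (vnorm h + 1)) * vnorm h = gap * (vnorm h / (2 * (vnorm h + 1))) by field; lra.
  have : vnorm h / (2 * (vnorm h + 1)) < 1.
    apply: (Rmult_lt_reg_r (2 * (vnorm h + 1))); first lra.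
    have -> : vnorm h / (2 * (vnorm h + 1)) * (2 * (vnorm h + 1)) = vnorm h by field; lra.
    lra.
  have : 0 < gap by rewrite /gap; lra.
  have : 0 <= vnorm h / (2 * (vnorm h + 1)) by rewrite /Rdiv; apply: Rmult_le_pos; [lra | apply: Rlt_le; apply: Rinv_0_lt_compat; lra].
  nra.
rewrite /gap in H4.
have H5 : 0 <= s * (g z - g a - inner G h + eps * vnorm h) by nra.
have H6 : 0 <= g z - g a - inner G h + eps * vnorm h.
  apply: (Rmult_le_reg_l s); lra.
lra. Qed.


Lemma eps_subgrad_unif (Gf : vec d -> vec d) (M : vec d -> Prop) :
  (forall x, has_gradient g x (Gf x)) -> compact_set M -> vcontinuous Gf ->
  forall eta, eta > 0 -> exists e, e > 0 /\ forall c y, M c ->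
    (forall z, g z >= g c + inner y (vsub z c) - e) -> vnorm (vsub y (Gf c)) <= eta.
Proof. move=> Hgrad HM HGc eta Heta.
case: (unif_cont HM HGc (eta := eta / 2) ltac:(lra)) => t [Ht HUC].
exists (t * eta / 2); split; first by apply: Rlt_gt; apply: Rdiv_lt_0_compat; nra.
move=> c y Mc Hy.
set w := vsub y (Gf c).
case: (Rle_dec (vnorm w) eta) => // hw.
have Hw : vnorm w > eta by lra.
set h := vscale (t / vnorm w) w.
have Hnh : vnorm h = t.
  rewrite /h vnorm_scale Rabs_pos_eq; first by field; lra.
  apply: Rlt_le; apply: Rdiv_lt_0_compat; lra.
have H1 := Hy (vadd c h).
have E1 : inner y (vsub (vadd c h) c) = inner y h.
  apply: inner_ext => // i; rewrite /vsub /vadd; ring.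
rewrite E1 in H1.
have H2 := leg_subgrad (Hgrad (vadd c h)) c.
have E2 : inner (Gf (vadd c h)) (vsub c (vadd c h)) = - inner (Gf (vadd c h)) h.
  have -> : vsub c (vadd c h) = vscale (-1) h.
    apply: functional_extensionality => i; rewrite /vsub /vadd /vscale; ring.
  rewrite inner_scaler; ring.
rewrite E2 in H2.
have H3 := HUC c h Mc (Req_le _ _ Hnh).
have H4 := CS1 (vsub (Gf (vadd c h)) (Gf c)) h.
rewrite inner_subl Hnh in H4.
have E3 : inner w h = t * vnorm w.
  rewrite /h inner_scaler -vnorm_sq; field; lra.
rewrite /w inner_subl -/w in E3.
have : t * vnorm w <= t * eta.
  have : inner (Gf c) h = inner h (Gf c) by apply: inner_sym.
  have : inner (Gf (vadd c h)) h <= inner (Gf c) h + eta / 2 * t by nra.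
  move=> *; lra.
move=> H5. have : vnorm w <= eta by apply: (Rmult_le_reg_l t); lra.
lra. Qed.

Lemma approx_in_N x y e : compact_set N -> convex_set N ->
  (forall z, g z >= g x + inner y (vsub z x) - e) -> N y.
Proof. move=> HNc HNv Hy.
case: Hne => y0 Ny0.
case: (@minimizer d N y0 y HNc Ny0) => p [Np Hp].
set v := vsub y p.
have Hvar : forall y', N y' -> inner v y' <= inner v p.
  move=> y' Ny'. apply: Rnot_lt_le => hlt.
  set e1 := vsub y' p.
  have Hb1 : 0 < inner v e1 by rewrite /e1 inner_subr; lra.
  have He := inner_ge0 e1.
  have Q : forall t, 0 < t <= 1 -> 2 * t * inner v e1 <= t * t * inner e1 e1.
    move=> t Ht. have Nw : N (vadd (vscale t y') (vscale (1 - t) p)) by apply: HNv => //; lra.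
    have := vnorm_le _ _ (Hp _ Nw).
    have -> : vsub y (vadd (vscale t y') (vscale (1 - t) p)) = vsub v (vscale t e1).
      apply: functional_extensionality => i; rewrite /v /e1 /vsub /vadd /vscale; ring.
    rewrite expand_sq -/v. move=> h. nra.
  pose t := Rmin 1 (inner v e1 / (inner e1 e1 + 1)).
  have Ht0 : 0 < t by apply: Rmin_glb_lt; [lra | apply: Rdiv_lt_0_compat; lra].
  have Ht1 : t <= 1 by apply: Rmin_l.
  have Ht2 : t <= inner v e1 / (inner e1 e1 + 1) by apply: Rmin_r.
  have Ht3 : t * (inner e1 e1 + 1) <= inner v e1.
    have -> : inner v e1 = inner v e1 / (inner e1 e1 + 1) * (inner e1 e1 + 1) by field; lra.
    apply: Rmult_le_compat_r; lra.
  have := Q t (conj Ht0 Ht1).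
  have : t * inner e1 e1 < 2 * inner v e1 by nra.
  nra.
have Hvv : forall s, 0 <= s -> s * inner v v <= e.
  move=> s Hs.
  have U : g (vadd x (vscale s v)) <= g x + s * inner v p.
    apply: leg_lub => y' Ny'. rewrite inner_addl inner_scalel.
    have := leg_ub x Ny'; have := Hvar y' Ny'. nra.
  have L := Hy (vadd x (vscale s v)).
  have E : inner y (vsub (vadd x (vscale s v)) x) = s * inner y v.
    rewrite -inner_scaler; apply: inner_ext => // i; rewrite /vsub /vadd /vscale; ring.
  rewrite E in L.
  have : inner v v = inner y v - inner v p by rewrite {1}/v inner_subl (inner_sym p v) (inner_sym y v).
  nra.
have Hz : inner v v <= 0.
  apply: Rnot_lt_le => hlt.
  have := Hvv ((Rabs e + 1) / inner v v) ltac:(apply: Rlt_le; apply: Rdiv_lt_0_compat; [have := Rabs_pos e; lra | lra]).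
  have -> : (Rabs e + 1) / inner v v * inner v v = Rabs e + 1 by field; lra.
  have := Rle_abs e. lra.
have Hyp : y = p.
  apply: functional_extensionality => i. have := inner_eq0 Hz i. rewrite /v /vsub. lra.
by rewrite Hyp.
Qed.

End G.


Lemma abs_bounds a b : Rabs a <= b -> - b <= a <= b.
Proof. move=> H; have := Rle_abs a; have := Rle_abs (- a); rewrite Rabs_Ropp; lra. Qed.

Lemma bound_shift d (N : vec d -> Prop) f BN z0 z :
  (forall y, N y -> vnorm y <= BN) -> bound (Sset N f z0) -> bound (Sset N f z).
Proof. move=> HBN [B0 HB0]. exists (B0 + vnorm (vsub z z0) * BN) => r [y [Ny ->]].
have h1 : inner z0 y - f y <= B0 by apply: HB0; exists y.
have h2 := CS1 (vsub z z0) y. rewrite inner_subl in h2.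
have h3 := HBN y Ny. have h4 := vnorm_ge0 (vsub z z0).
have : vnorm (vsub z z0) * vnorm y <= vnorm (vsub z z0) * BN by apply: Rmult_le_compat_l.
lra. Qed.

Lemma grad_zero d (g : vec d -> R) x G : (forall z, g z = 0) -> has_gradient g x G -> inner G G <= 0.
Proof. move=> Hg HG. apply: Rnot_lt_le => hpos.
have Hn : 0 < vnorm G.
  have := vnorm_sq G. have := vnorm_ge0 G. move=> h1 h2. case: (Rle_lt_or_eq_dec _ _ h1) => // h3.
  rewrite -h3 in h2; lra.
case: (HG (vnorm G / 2) ltac:(lra)) => del [Hdel Hd].
pose s := del / (2 * (vnorm G + 1)).
have Hs : 0 < s by apply: Rdiv_lt_0_compat; lra.
have Hsh : vnorm (vscale s G) < del.
  rewrite vnorm_scale Rabs_pos_eq; last lra.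
  have -> : s * vnorm G = del * (vnorm G / (2 * (vnorm G + 1))) by rewrite /s; field; lra.
  have : vnorm G / (2 * (vnorm G + 1)) < 1.
    apply: (Rmult_lt_reg_r (2 * (vnorm G + 1))); first lra.
    have -> : vnorm G / (2 * (vnorm G + 1)) * (2 * (vnorm G + 1)) = vnorm G by field; lra.
    lra.
  nra.
have := Hd _ Hsh. rewrite !Hg inner_scaler vnorm_scale (Rabs_pos_eq s (Rlt_le _ _ Hs)).
rewrite -vnorm_sq. have : 0 < s * (vnorm G * vnorm G) by apply: Rmult_lt_0_compat => //; apply: Rmult_lt_0_compat.
move=> h1 h2. have h3 := Rle_abs (- (s * (vnorm G * vnorm G))). rewrite Rabs_Ropp in h3.
have E : 0 - 0 - s * (vnorm G * vnorm G) = - (s * (vnorm G * vnorm G)) by ring.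
rewrite E Rabs_Ropp in h2.
have h4 := Rle_abs (s * (vnorm G * vnorm G)). nra. Qed.

Lemma leg_close d (N : vec d -> Prop) f f1 del : (forall z, bound (Sset N f z)) -> (exists y, N y) ->
  (forall y, N y -> Rabs (f1 y - f y) <= del) ->
  forall z, bound (Sset N f1 z) /\ Rabs (legendreN N f1 z - legendreN N f z) <= del.
Proof. move=> Hb Hne Hd.
have Hb1 : forall z, bound (Sset N f1 z).
  move=> z; exists (legendreN N f z + del) => r [y [Ny ->]].
  have := leg_ub Hb z y Ny. have := @abs_bounds _ _ (Hd y Ny). lra.
move=> z; split => //. apply: Rabs_le. split.
- have : legendreN N f z <= legendreN N f1 z + del.
    apply: (leg_lub N f Hne) => y Ny. have := leg_ub Hb1 z y Ny. have := @abs_bounds _ _ (Hd y Ny). lra.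
  lra.
- have : legendreN N f1 z <= legendreN N f z + del.
    apply: (leg_lub N f1 Hne) => y Ny. have := leg_ub Hb z y Ny. have := @abs_bounds _ _ (Hd y Ny). lra.
  lra.
Qed.

Unset Implicit Arguments.
Theorem lemmaA1 (d : nat) (N : vec d -> Prop) (fn : nat -> vec d -> R) (f : vec d -> R)
  (Gf : vec d -> vec d) (M : vec d -> Prop) :
  compact_set N -> convex_set N ->
  (forall n, convex_on N (fn n)) -> convex_on N f ->
  (forall x, has_gradient (legendreN N f) x (Gf x)) ->
  (forall x, N (Gf x)) -> vcontinuous Gf ->
  compact_set M -> (forall y, N y <-> exists x, M x /\ Gf x = y) ->
  (forall eps, eps > 0 -> exists n0, forall n, (n0 <= n)%nat ->
      forall y, N y -> Rabs (fn n y - f y) <= eps) ->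
  (forall eps, eps > 0 -> exists n0, forall n, (n0 <= n)%nat ->
      forall x y, subdiff (legendreN N (fn n)) x y -> vnorm (vsub y (Gf x)) <= eps).
Proof.
move=> HNc HNv _ _ Hgrad HGin HGc HMc HNM Hunif eps Heps.
pose x0 : vec d := fun _ => 0.
have Hne : exists y, N y by exists (Gf x0).
case: (compact_bounded HNc) => BN HBN.
have Hb : forall z, bound (Sset N f z).
  case: (classic (bound (Sset N f x0))) => Hx0.
  - move=> z; exact: bound_shift HBN Hx0.
  - exfalso.
    have Hz : forall z, legendreN N f z = 0.
      move=> z; apply: sup_unb => hb; apply: Hx0; exact: bound_shift HBN hb.
    have HG0 : forall x, Gf x = x0.
      move=> x; apply: functional_extensionality => i.
      have := inner_eq0 (grad_zero Hz (Hgrad x)) i. by [].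
    apply: Hx0. exists (- f x0) => r [y [Ny ->]].
    case: (proj1 (HNM y) Ny) => m [_ Hm]. rewrite -Hm HG0.
    have -> : inner x0 x0 = 0 by rewrite /inner; apply: big1 => i _; rewrite /x0; ring.
    lra.
case: (eps_subgrad_unif Hb Hne Hgrad HMc HGc (eta := eps / 2) ltac:(lra)) => e [He HUS].
case: (Hunif (e / 2) ltac:(lra)) => n0 Hn0.
exists n0 => n Hn x y Hsd.
have Hcl := @leg_close d N f (fn n) (e / 2) Hb Hne (Hn0 n Hn).
set g := legendreN N f in Hgrad Hcl HUS *.
have Happ : forall z, g z >= g x + inner y (vsub z x) - e.
  move=> z. have := Hsd z. have := @abs_bounds _ _ (proj2 (Hcl z)). have := @abs_bounds _ _ (proj2 (Hcl x)). lra.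
have Ny : N y by exact: (approx_in_N Hb Hne HNc HNv Happ).
set p := Gf x.
pose q := vadd (vscale (1/2) y) (vscale (1 - 1/2) p).
have Nq : N q by apply: HNv => //; [exact: HGin | lra].
case: (proj1 (HNM q) Nq) => c [Mc Hc].
have S1 := leg_subgrad Hb Hne (Hgrad c) x. rewrite Hc in S1.
have S2 := leg_subgrad Hb Hne (Hgrad x) c. rewrite -/p in S2.
rewrite /q inner_addl !inner_scalel !inner_subr in S1.
rewrite !inner_subr in S2.
have Hc' : forall z, g z >= g c + inner y (vsub z c) - e.
  move=> z. have := Happ z. rewrite !inner_subr -/g in S1 S2 *. move=> h; lra.
have H := HUS c y Mc Hc'. rewrite Hc in H.
have -> : vsub y p = vscale 2 (vsub y q).
  apply: functional_extensionality => i; rewrite /vsub /vscale /q /vadd /vscale /=; field.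
rewrite vnorm_scale Rabs_pos_eq; lra.
Qed.
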